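(* Let $C\in\mathbb{R}^{r\times n}$, $d\in\mathbb{R}^r$, where the system $Cx\ge d$ contains the constraints $x_j\ge0$ and $-x_j\ge-1$ for all $j\in[n]$, and let $\mathcal{X}=\{x\in\{0,1\}^n\mid Cx\ge d\}\ne\emptyset$. For $i\in[m]$ let $a_{i0}\in\mathbb{R}$, $a_i\in\mathbb{R}^n$ with $a_{i0}+a_i^\top x>0$ for all $x\in\mathcal{X}$, and \[ \mathcal{G}=\Bigl\{(\rho,y)=\bigl((\rho^i)_{i\in[m]},(y^i)_{i\in[m]}\bigr)\Bigm| x\in\mathcal{X},\ (\rho^i,y^i)=\frac{(1,x)}{a_{i0}+a_i^\top x}\ \text{for }i\in[m]\Bigr\}. \] For $k\in[n]$ let $\mathcal{R}^k=\{(\rho,y,u)\mid (\rho^i,y^i,u)\in\mathcal{R}^k_i\ \text{for all } i\in[m]\}$ (with $\mathcal{R}^k_i$ defined in the context). Then \[ \operatorname{proj}_{(\rho,y)}(\mathcal{R}^1)\supseteq\operatorname{proj}_{(\rho,y)}(\mathcal{R}^2)\supseteq\cdots\supseteq\operatorname{proj}_{(\rho,y)}(\mathcal{R}^n)=\operatorname{conv}(\mathcal{G}). \]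
   Context: $\mathrm{RLT}_k(\mathcal{X})$: for each row $c_lx\ge d_l$ of $Cx\ge d$ and each pair of disjoint $S,T\subseteq[n]$ with $|S\cup T|=k$, expand $(c_lx-d_l)\prod_{s\in S}x_s\prod_{t\in T}(1-x_t)\ge0$, reduce to a multilinear polynomial using $x_j^2=x_j$, and replace each monomial $\prod_{j\in e}x_j$ ($e\ne\emptyset$) by a variable $z_e$ (the empty monomial is $1$); the variables are $z_e$ for $e\subseteq[n]$, $1\le|e|\le\min(k+1,n)$. For $\rho\ge0$, ''$w\in\rho\,\mathrm{RLT}_k(\mathcal{X})$'' means $w=(w_e)$ satisfies these linear inequalities with $z$ replaced by $w$ and every constant term multiplied by $\rho$. For $i\in[m]$, $\mathcal{R}^k_i$ is the set of $(\rho^i,y^i,u)\in\mathbb{R}\times\mathbb{R}^n\times\mathbb{R}^{\{S\subseteq[n]:1\le|S|\le k\}}$ such that there is $w^i$ with: $\rho^i\ge0$, $w^i\in\rho^i\,\mathrm{RLT}_k(\mathcal{X})$, $y^i_j=w^i_{\{j\}}$ for $j\in[n]$, $a_{i0}\rho^i+a_i^\top y^i=1$, and for every $S\subseteq[n]$ with $1\le|S|\le k$: $u_S=\bigl(a_{i0}+\sum_{j\in S}a_{ij}\bigr)w^i_S+\sum_{r\in[n]\setminus S}a_{ir}w^i_{S\cup\{r\}}$. ($u_S$ models $\prod_{j\in S}x_j$ and $w^i_S$ models $\prod_{j\in S}x_j/(a_{i0}+a_i^\top x)$.) *)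

(* Defs.v *)
From HB Require Import structures.
From mathcomp Require Import all_boot all_order all_algebra.
Set Implicit Arguments. Unset Strict Implicit. Unset Printing Implicit Defensive.
Import Order.TTheory GRing.Theory Num.Theory.
Local Open Scope ring_scope.

(* Points x in {0,1}^n are represented by their support x : {set 'I_n}. *)
Definition inX (R : realFieldType) (r n : nat) (C : 'I_r -> 'I_n -> R)
  (d : 'I_r -> R) (x : {set 'I_n}) : Prop :=
  forall l : 'I_r, d l <= \sum_(j < n) C l j * (j \in x)%:R.

(* value of the variable attached to the monomial prod_{j in e} x_j :
   the empty monomial is 1, which after homogenisation by rho becomes rho *)
Definition Wv (R : realFieldType) (n : nat) (rho : R) (w : {set 'I_n} -> R)
  (e : {set 'I_n}) : R := if e == set0 then rho else w e.

(* Linearisation (with z replaced by w and constants multiplied by rho) of the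
   multilinear reduction of (c_l x - d_l) prod_{s in S} x_s prod_{t in T} (1 - x_t)
   = sum_{U subset T} (-1)^|U| (sum_j c_lj x_{S u U u {j}} - d_l x_{S u U}). *)
Definition rlt_lhs (R : realFieldType) (r n : nat) (C : 'I_r -> 'I_n -> R)
  (d : 'I_r -> R) (l : 'I_r) (S T : {set 'I_n}) (rho : R) (w : {set 'I_n} -> R) : R :=
  \sum_(U in powerset T)
     (-1) ^+ #|U| * (\sum_(j < n) C l j * Wv rho w (S :|: U :|: [set j])
                     - d l * Wv rho w (S :|: U)).

Definition inRLT (R : realFieldType) (r n : nat) (C : 'I_r -> 'I_n -> R)
  (d : 'I_r -> R) (k : nat) (rho : R) (w : {set 'I_n} -> R) : Prop :=
  forall (l : 'I_r) (S T : {set 'I_n}), [disjoint S & T] -> #|S :|: T| = k ->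
    0 <= rlt_lhs C d l S T rho w.

Definition inRki (R : realFieldType) (r n m : nat) (C : 'I_r -> 'I_n -> R)
  (d : 'I_r -> R) (a0 : 'I_m -> R) (a : 'I_m -> 'I_n -> R) (k : nat) (i : 'I_m)
  (rhoi : R) (yi : 'I_n -> R) (u : {set 'I_n} -> R) : Prop :=
  exists w : {set 'I_n} -> R,
    [/\ 0 <= rhoi,
        inRLT C d k rhoi w,
        (forall j : 'I_n, yi j = w [set j]),
        a0 i * rhoi + \sum_(j < n) a i j * yi j = 1
      & forall S : {set 'I_n}, (1 <= #|S| <= k)%N ->
          u S = (a0 i + \sum_(j in S) a i j) * w S
                + \sum_(q in ~: S) a i q * w (S :|: [set q])].

Definition inProjR (R : realFieldType) (r n m : nat) (C : 'I_r -> 'I_n -> R)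
  (d : 'I_r -> R) (a0 : 'I_m -> R) (a : 'I_m -> 'I_n -> R) (k : nat)
  (rho : 'I_m -> R) (y : 'I_m -> 'I_n -> R) : Prop :=
  exists u : {set 'I_n} -> R, forall i : 'I_m, inRki C d a0 a k i (rho i) (y i) u.

Definition den (R : realFieldType) (n m : nat) (a0 : 'I_m -> R)
  (a : 'I_m -> 'I_n -> R) (i : 'I_m) (x : {set 'I_n}) : R :=
  a0 i + \sum_(j < n) a i j * (j \in x)%:R.

Definition inConvG (R : realFieldType) (r n m : nat) (C : 'I_r -> 'I_n -> R)
  (d : 'I_r -> R) (a0 : 'I_m -> R) (a : 'I_m -> 'I_n -> R)
  (rho : 'I_m -> R) (y : 'I_m -> 'I_n -> R) : Prop :=
  exists (K : nat) (lam : 'I_K -> R) (xs : 'I_K -> {set 'I_n}),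
    [/\ forall t, 0 <= lam t,
        \sum_(t < K) lam t = 1,
        forall t, inX C d (xs t),
        forall i, rho i = \sum_(t < K) lam t * (den a0 a i (xs t))^-1
      & forall i j, y i j = \sum_(t < K) lam t * ((j \in xs t)%:R / den a0 a i (xs t))].

(* Main.v *)
Require Import Defs.
From HB Require Import structures.
From mathcomp Require Import all_boot all_order all_algebra.
From mathcomp Require Import lra ring.
Import Order.TTheory GRing.Theory Num.Theory.
Local Open Scope ring_scope.
Set Implicit Arguments. Unset Strict Implicit.

Definition tog (T : finType) (j : T) (S : {set T}) :=
  if j \in S then S :\ j else j |: S.

Lemma togK (T : finType) (j : T) : involutive (tog j).
Proof.
move=> S; rewrite /tog; case hj: (j \in S).
  have -> : (j \in S :\ j) = false by rewrite !inE eqxx.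
  by rewrite setD1K.
have -> : (j \in j |: S) = true by rewrite !inE eqxx.
by rewrite setU1K ?hj.
Qed.

Lemma in_tog (T : finType) (j x : T) S :
  (x \in tog j S) = if x == j then j \notin S else x \in S.
Proof.
rewrite /tog; case: ifP => hj; rewrite !inE; case: eqP => [->|] //=; by rewrite hj.
Qed.

Lemma sign_tog (R : realFieldType) (T : finType) (j : T) S :
  (-1) ^+ #|tog j S| = - ((-1) ^+ #|S|) :> R.
Proof.
rewrite /tog; case: ifP => hj.
  by rewrite [in RHS](cardsD1 j) hj exprS mulN1r opprK.
by rewrite cardsU1 hj exprS mulN1r.
Qed.

Lemma tog_sum0 (R : realFieldType) (T : finType) (j : T) (P : pred {set T})
  (F : {set T} -> R) :
  (forall S, P (tog j S) = P S) -> (forall S, P S -> F (tog j S) = - F S) ->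
  \sum_(S | P S) F S = 0.
Proof.
move=> hP hF.
have e: \sum_(S | P S) F S = - \sum_(S | P S) F S.
  rewrite {1}(reindex_inj (can_inj (togK j))) /=.
  rewrite -sumrN; apply: eq_big => S; first by rewrite hP.
  by move=> PS; rewrite hF // -hP.
lra.
Qed.

Lemma sub_togl (T : finType) (j : T) (A S : {set T}) :
  j \notin A -> (A \subset tog j S) = (A \subset S).
Proof.
move=> hj; apply/subsetP/subsetP => h x xA; have := h x xA; rewrite in_tog;
  case: eqP => // ex; by move: xA hj; rewrite ex => ->.
Qed.

Lemma sub_togr (T : finType) (j : T) (B S : {set T}) :
  j \in B -> (tog j S \subset B) = (S \subset B).
Proof.
move=> hj; apply/subsetP/subsetP => h x.
  move=> xS; case: (x =P j) => [-> //|nx]; apply: h; by rewrite in_tog (negbTE (introN eqP nx)).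
rewrite in_tog; case: (x =P j) => [-> //|_]; exact: h.
Qed.

Lemma setD_togr (T : finType) (j : T) (V S : {set T}) :
  j \in V -> V :\: tog j S = tog j (V :\: S).
Proof.
move=> hj; apply/setP => x; rewrite !(in_tog, inE); case: eqP => [->|] //.
by rewrite hj !andbT negbK.
Qed.

Lemma setD_togl (T : finType) (j : T) (V S : {set T}) :
  j \notin S -> tog j V :\: S = tog j (V :\: S).
Proof.
move=> hj; apply/setP => x; rewrite !(in_tog, inE); case: eqP => [->|] //.
by rewrite hj.
Qed.

Lemma alt_up (R : realFieldType) (T : finType) (e V : {set T}) : e \subset V ->
  \sum_(S : {set T} | (e \subset S) && (S \subset V)) (-1) ^+ #|V :\: S| = (e == V)%:R :> R.
Proof.
move=> eV; case: eqP => [<-|ne].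
  rewrite (big_pred1 e) ?setDv ?cards0 ?expr0 // => S /=.
  by rewrite eq_sym eqEsubset.
have [j /setDP [jV je]] : exists j, j \in V :\: e.
  apply/set0Pn; apply: contra_notN ne => /eqP h.
  by apply/eqP; rewrite eqEsubset eV /= -setD_eq0 h.
rewrite (@tog_sum0 _ _ j) // => S; first by rewrite sub_togl // sub_togr.
by rewrite setD_togr // sign_tog.
Qed.

Lemma alt_lo (R : realFieldType) (T : finType) (S V : {set T}) : S \subset V ->
  \sum_(W : {set T} | (S \subset W) && (W \subset V)) (-1) ^+ #|W :\: S| = (S == V)%:R :> R.
Proof.
move=> eV; case: eqP => [<-|ne].
  rewrite (big_pred1 S) ?setDv ?cards0 ?expr0 // => W /=.
  by rewrite eq_sym eqEsubset andbC.
have [j /setDP [jV je]] : exists j, j \in V :\: S.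
  apply/set0Pn; apply: contra_notN ne => /eqP h.
  by apply/eqP; rewrite eqEsubset eV /= -setD_eq0 h.
rewrite (@tog_sum0 _ _ j) // => W; first by rewrite sub_togl // sub_togr.
by rewrite setD_togl // sign_tog.
Qed.

Lemma reidx (R : realFieldType) (T : finType) (S : {set T}) (F : {set T} -> {set T} -> R) :
  \sum_(U : {set T} | U \subset ~: S) F U (S :|: U) = \sum_(W : {set T} | S \subset W) F (W :\: S) W.
Proof.
rewrite [RHS](reindex_onto (fun U => S :|: U) (fun W => W :\: S)) /=; last first.
  move=> W /subsetP SW; apply/setP => x; rewrite !inE.
  by case xS: (x \in S) => //=; rewrite (SW x xS).
symmetry; apply: eq_big => U.
  rewrite subsetUl /=; apply/eqP/idP.
    move=> h; apply/subsetP => x; rewrite -h !inE; by case/andP.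
  move=> /subsetP h; apply/setP => x; rewrite !inE.
  case xU: (x \in U); rewrite ?orbT ?andbT ?andbF //=.
  by have := h x xU; rewrite inE => ->.
  by case: (x \in S).
move=> /andP [_ /eqP h]; by rewrite h.
Qed.

Lemma psplit (R : realFieldType) (T : finType) (j : T) (B : {set T}) (F : {set T} -> R) :
  j \notin B ->
  \sum_(U in powerset (j |: B)) F U =
  \sum_(U in powerset B) F U + \sum_(U in powerset B) F (j |: U).
Proof.
move=> jB; rewrite (bigID (fun U : {set T} => j \in U)) /= addrC; congr (_ + _).
  apply: eq_bigl => U; rewrite !powersetE; apply/idP/idP.
    case/andP=> /subsetP h jU; apply/subsetP => x xU.
    have := h x xU; rewrite !inE; case: eqP => // ex; by rewrite -ex xU in jU.
  move=> /subsetP h; apply/andP; split.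
    apply/subsetP => x xU; rewrite !inE h ?orbT //.
  by apply: contra jB; apply: h.
rewrite (reindex_onto (fun V => j |: V) (fun U => U :\ j)) /=; last first.
  by move=> U /andP [_ jU]; rewrite setD1K.
apply: eq_bigl => V; rewrite !powersetE setU11 andbT; apply/idP/idP.
  case/andP=> /subsetP h /eqP e; apply/subsetP => x xV.
  have := h x; rewrite !inE xV orbT => /(_ isT) /orP [/eqP ex|//].
  by move: xV; rewrite -e ex !inE eqxx.
move=> /subsetP h; apply/andP; split.
  apply/subsetP => x; rewrite !inE => /orP [->//|/h ->]; by rewrite orbT.
apply/eqP/setP => x; rewrite !inE; case: eqP => [->|] /=.
  by apply/esym/negP => /h; apply/negP.
by move=> _; case: (x \in V).
Qed.

Definition Gf (R : realFieldType) (r n : nat) (C : 'I_r -> 'I_n -> R) (d : 'I_r -> R)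
  (l : 'I_r) (V : {set 'I_n} -> R) (E : {set 'I_n}) : R :=
  \sum_(j < n) C l j * V (E :|: [set j]) - d l * V E.

Definition rltV (R : realFieldType) (r n : nat) (C : 'I_r -> 'I_n -> R) (d : 'I_r -> R)
  (l : 'I_r) (S T : {set 'I_n}) (V : {set 'I_n} -> R) : R :=
  \sum_(U in powerset T) (-1) ^+ #|U| * Gf C d l V (S :|: U).

Lemma rlt_lhsE (R : realFieldType) (r n : nat) (C : 'I_r -> 'I_n -> R) (d : 'I_r -> R)
  l S T rho w : rlt_lhs C d l S T rho w = rltV C d l S T (Wv rho w).
Proof. by []. Qed.

Lemma rltV_split (R : realFieldType) (r n : nat) (C : 'I_r -> 'I_n -> R) (d : 'I_r -> R)
  l (S T : {set 'I_n}) V (j : 'I_n) : j \notin T ->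
  rltV C d l S T V = rltV C d l S (j |: T) V + rltV C d l (j |: S) T V.
Proof.
move=> jT; rewrite /rltV psplit //.
have -> : \sum_(U in powerset T) (-1) ^+ #|j |: U| * Gf C d l V (S :|: (j |: U)) =
          - \sum_(U in powerset T) (-1) ^+ #|U| * Gf C d l V ((j |: S) :|: U).
  rewrite -sumrN; apply: eq_bigr => U; rewrite powersetE => /subsetP UT.
  have jU : j \notin U by apply: contra jT; apply: UT.
  rewrite cardsU1 jU exprS mulN1r mulNr; congr (- (_ * Gf _ _ _ _ _)).
  by rewrite setUCA setUA.
by rewrite addrNK.
Qed.

Lemma part1 (R : realFieldType) (r n m : nat)
  (C : 'I_r -> 'I_n -> R) (d : 'I_r -> R)
  (a0 : 'I_m -> R) (a : 'I_m -> 'I_n -> R) (k : nat) :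
  (k < n)%N -> forall (rho : 'I_m -> R) (y : 'I_m -> 'I_n -> R),
       inProjR C d a0 a k.+1 rho y -> inProjR C d a0 a k rho y.
Proof.
move=> hk rho y [u hu]; exists u => i; have [w [h0 hr hy hnm hu']] := hu i.
exists w; split => //; last first.
  move=> S /andP [h1 h2]; apply: hu'; rewrite h1 /=; exact: leqW.
move=> l S T dST cST.
have [j jST] : exists j, j \notin S :|: T.
  apply/existsP; apply: contraLR hk; rewrite negb_exists => /forallP h.
  have e : S :|: T = setT by apply/setP => x; have := h x; rewrite negbK !inE => ->.
  by rewrite -cST e cardsT card_ord ltnn.
have jS : j \notin S by apply: contra jST; rewrite inE => ->.
have jT : j \notin T by apply: contra jST; rewrite inE => ->; rewrite orbT.
rewrite rlt_lhsE (rltV_split _ _ _ _ _ jT); apply: addr_ge0; rewrite -rlt_lhsE; apply: hr.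
- rewrite disjoints_subset; apply/subsetP => x xS; rewrite !inE negb_or.
  apply/andP; split; first by apply: contraNneq jS => <-.
  by move: dST; rewrite disjoints_subset => /subsetP /(_ x xS); rewrite inE.
- by rewrite setUCA cardsU1 jST cST.
- rewrite disjoints_subset; apply/subsetP => x; rewrite !inE => /orP [/eqP ->|xS].
    by [].
  by move: dST; rewrite disjoints_subset => /subsetP /(_ x xS); rewrite inE.
- by rewrite -setUA cardsU1 jST cST.
Qed.

Definition lam (R : realFieldType) (n : nat) (V : {set 'I_n} -> R) (S : {set 'I_n}) : R :=
  \sum_(U : {set 'I_n} | U \subset ~: S) (-1) ^+ #|U| * V (S :|: U).

Lemma lamE (R : realFieldType) (n : nat) (V : {set 'I_n} -> R) (S : {set 'I_n}) :
  lam V S = \sum_(W : {set 'I_n} | S \subset W) (-1) ^+ #|W :\: S| * V W.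
Proof. by rewrite /lam (reidx S (fun U W => (-1) ^+ #|U| * V W)). Qed.

Lemma moeb1 (R : realFieldType) (n : nat) (V : {set 'I_n} -> R) (e : {set 'I_n}) :
  V e = \sum_(S : {set 'I_n} | e \subset S) lam V S.
Proof.
under eq_bigr do rewrite lamE.
rewrite (exchange_big_dep (fun W : {set 'I_n} => e \subset W)) /=; last first.
  by move=> S W eS SW; apply: subset_trans eS SW.
under eq_bigr => W eW do rewrite -mulr_suml alt_up //.
rewrite (bigD1 e) //= eqxx mul1r big1 ?addr0 // => W /andP [_ ne].
by rewrite eq_sym (negbTE ne) mul0r.
Qed.

Lemma moeb2 (R : realFieldType) (n : nat) (mu : {set 'I_n} -> R) (S : {set 'I_n}) :
  mu S = lam (fun E => \sum_(T : {set 'I_n} | E \subset T) mu T) S.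
Proof.
rewrite lamE.
under eq_bigr do rewrite mulr_sumr.
rewrite (exchange_big_dep (fun T : {set 'I_n} => S \subset T)) /=; last first.
  by move=> W T eS SW; apply: subset_trans eS SW.
under eq_bigr => T eT do rewrite -mulr_suml alt_lo //.
rewrite (bigD1 S) //= eqxx mul1r big1 ?addr0 // => W /andP [_ ne].
by rewrite eq_sym (negbTE ne) mul0r.
Qed.

Lemma tog_cancel (R : realFieldType) (T : finType) (B : {set T}) (j : T) (f : {set T} -> R) :
  j \in B -> \sum_(U : {set T} | U \subset B) (-1) ^+ #|U| * f (U :|: [set j]) = 0.
Proof.
move=> jB; rewrite (@tog_sum0 _ _ j) // => U; first by rewrite sub_togr.
move=> _; rewrite sign_tog mulNr; congr (- (_ * f _)).
apply/setP => x; rewrite !inE in_tog; case: eqP => _; by rewrite ?orbT ?orbF.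
Qed.

Lemma rltV_full (R : realFieldType) (r n : nat) (C : 'I_r -> 'I_n -> R) (d : 'I_r -> R)
  l (S : {set 'I_n}) V :
  rltV C d l S (~: S) V = (\sum_(j < n) C l j * (j \in S)%:R - d l) * lam V S.
Proof.
rewrite /rltV /Gf.
under eq_bigl do rewrite powersetE.
under eq_bigr do rewrite mulrBr mulr_sumr.
rewrite sumrB exchange_big /= mulrBl mulr_suml; congr (_ - _); last first.
  by rewrite /lam mulr_sumr; apply: eq_bigr => U _; rewrite mulrCA.
apply: eq_bigr => j _; case jS: (j \in S).
  rewrite mulr1 /lam mulr_sumr; apply: eq_bigr => U _.
  rewrite mulrCA; congr (_ * (_ * V _)).
  apply/setP => x; rewrite !inE; case: eqP => [->|]; by rewrite ?jS ?orbT ?orbF.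
rewrite mulr0 mul0r.
under eq_bigr do rewrite mulrCA -setUA.
rewrite -mulr_sumr (@tog_cancel _ _ _ _ (fun X => V (S :|: X))) ?mulr0 //.
by rewrite inE jS.
Qed.

Lemma rltV_int (R : realFieldType) (r n : nat) (C : 'I_r -> 'I_n -> R) (d : 'I_r -> R)
  l (S T x : {set 'I_n}) : inX C d x ->
  0 <= rltV C d l S T (fun E => (E \subset x)%:R).
Proof.
move=> hx; set c := \sum_(j < n) C l j * (j \in x)%:R - d l.
have c0 : 0 <= c by rewrite subr_ge0; apply: hx.
have hG : forall E, Gf C d l (fun E => (E \subset x)%:R) E = (E \subset x)%:R * c.
  move=> E; rewrite /Gf /c; case Ex: (E \subset x).
    rewrite mul1r; congr (_ - _); last by rewrite mulr1.
    by apply: eq_bigr => j _; rewrite subUset Ex sub1set.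
  rewrite mul0r mulr0 subr0; apply: big1 => j _; by rewrite subUset Ex mulr0.
rewrite /rltV; under eq_bigr do rewrite hG mulrA.
rewrite -mulr_suml; apply: mulr_ge0 => //.
case: (set0Pn (T :&: x)) => [[j /setIP [jT jx]]|hTx]; last have Tx : T :&: x = set0 by apply/eqP; apply/negPn/negP => h; apply: hTx; apply/set0Pn.
  rewrite (@tog_sum0 _ _ j) // => U; first by rewrite !powersetE sub_togr.
  by move=> _; rewrite sign_tog !subUset sub_togr // mulNr.
rewrite (bigD1 set0) /=; last by rewrite powersetE sub0set.
rewrite big1 ?addr0; first by rewrite cards0 expr0 mul1r ler0n.
move=> U /andP [UT Un]; rewrite powersetE in UT.
have [z zU] := set0Pn U Un.
have -> : (S :|: U \subset x) = false.
  apply/negP => /subsetP h; have : z \in T :&: x by rewrite inE (subsetP UT z zU) h // inE zU orbT.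
  by rewrite Tx inE.
by rewrite mulr0.
Qed.

Lemma rltV_lin (R : realFieldType) (r n : nat) (C : 'I_r -> 'I_n -> R) (d : 'I_r -> R)
  l (S T : {set 'I_n}) (I : finType) (c : I -> R) (f : I -> {set 'I_n} -> R) :
  rltV C d l S T (fun E => \sum_t c t * f t E) = \sum_t c t * rltV C d l S T (f t).
Proof.
have hG : forall E, Gf C d l (fun E => \sum_t c t * f t E) E = \sum_t c t * Gf C d l (f t) E.
  move=> E; rewrite /Gf; under [RHS]eq_bigr do rewrite mulrBr.
  rewrite sumrB; congr (_ - _); last first.
    by rewrite mulr_sumr; apply: eq_bigr => t _; rewrite mulrCA.
  under eq_bigr do rewrite mulr_sumr.
  rewrite exchange_big /=; apply: eq_bigr => t _; rewrite mulr_sumr.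
  by apply: eq_bigr => j _; rewrite mulrCA.
rewrite /rltV; under eq_bigr do rewrite hG mulr_sumr.
rewrite exchange_big /=; apply: eq_bigr => t _; rewrite mulr_sumr.
by apply: eq_bigr => U _; rewrite mulrCA.
Qed.

Lemma rltV_ext (R : realFieldType) (r n : nat) (C : 'I_r -> 'I_n -> R) (d : 'I_r -> R)
  l (S T : {set 'I_n}) V V' : (forall E, V E = V' E) ->
  rltV C d l S T V = rltV C d l S T V'.
Proof.
move=> h; rewrite /rltV /Gf; apply: eq_bigr => U _; rewrite !h; congr (_ * (_ - _)).
by apply: eq_bigr => j _; rewrite h.
Qed.

Lemma bracket (R : realFieldType) (n : nat) (b0 : R) (b : 'I_n -> R) (S x : {set 'I_n}) :
  (b0 + \sum_(j in S) b j) * (S \subset x)%:R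
  + \sum_(q in ~: S) b q * (S :|: [set q] \subset x)%:R
  = (S \subset x)%:R * (b0 + \sum_(j < n) b j * (j \in x)%:R).
Proof.
case Sx: (S \subset x); last first.
  rewrite !mulr0 mul0r add0r; apply: big1 => q _; by rewrite subUset Sx mulr0.
rewrite mulr1 mul1r -addrA; congr (_ + _).
rewrite [RHS](bigID (fun j : 'I_n => j \in S)) /=; congr (_ + _).
  apply: eq_bigr => j jS; by rewrite (subsetP Sx j jS) mulr1.
apply: eq_big => q; first by rewrite inE.
by move=> _; rewrite subUset Sx sub1set.
Qed.

Lemma conv_to_proj (R : realFieldType) (r n m : nat)
  (C : 'I_r -> 'I_n -> R) (d : 'I_r -> R)
  (a0 : 'I_m -> R) (a : 'I_m -> 'I_n -> R)
  (hpos : forall (i : 'I_m) (x : {set 'I_n}), inX C d x -> 0 < den a0 a i x)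
  (rho : 'I_m -> R) (y : 'I_m -> 'I_n -> R) :
  inConvG C d a0 a rho y -> inProjR C d a0 a n rho y.
Proof.
case=> K [lm [xs [hl0 hl1 hX hrho hy]]].
exists (fun S : {set 'I_n} => \sum_t lm t * (S \subset xs t)%:R) => i.
pose c := fun t => lm t / den a0 a i (xs t).
have dpos t : 0 < den a0 a i (xs t) := hpos i _ (hX t).
have dn0 t : den a0 a i (xs t) != 0 by rewrite lt0r_neq0.
have c0 t : 0 <= c t by rewrite /c divr_ge0 // ltW.
exists (fun E : {set 'I_n} => \sum_t c t * (E \subset xs t)%:R); split.
- rewrite hrho; apply: sumr_ge0 => t _; exact: c0.
- move=> l S T _ _; rewrite rlt_lhsE (@rltV_ext _ _ _ _ _ _ _ _ _ (fun E : {set 'I_n} => \sum_t c t * (E \subset xs t)%:R)).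
    rewrite rltV_lin; apply: sumr_ge0 => t _; apply: mulr_ge0 => //; exact: rltV_int.
  move=> E; rewrite /Wv; case: eqP => // ->; rewrite hrho; apply: eq_bigr => t _.
  by rewrite sub0set mulr1.
- move=> j; rewrite hy; apply: eq_bigr => t _; rewrite sub1set /c mulrA mulrAC.
  by [].
- rewrite hrho (eq_bigr (fun j : 'I_n => a i j * \sum_t lm t * ((j \in xs t)%:R / den a0 a i (xs t)))); last by move=> j _; rewrite hy.
  transitivity (\sum_t lm t); last exact: hl1.
  transitivity (\sum_t c t * den a0 a i (xs t)); last first.
    by apply: eq_bigr => t _; rewrite /c divfK.
  rewrite {3}/den; under [RHS]eq_bigr do rewrite mulrDr.
  rewrite big_split; congr (_ + _).
    by rewrite mulr_sumr; apply: eq_bigr => t _; rewrite mulrC.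
  under eq_bigr do rewrite mulr_sumr.
  rewrite exchange_big /=; apply: eq_bigr => t _; rewrite mulr_sumr.
  by apply: eq_bigr => j _; rewrite /c; ring.
- move=> S _.
  transitivity (\sum_t c t * ((a0 i + \sum_(j in S) a i j) * (S \subset xs t)%:R
       + \sum_(q in ~: S) a i q * (S :|: [set q] \subset xs t)%:R)).
    apply: eq_bigr => t _; rewrite bracket /c.
    move: (dn0 t); rewrite /den => dt; field; exact: dt.
  under eq_bigr do rewrite mulrDr.
  rewrite big_split; congr (_ + _).
    by rewrite mulr_sumr; apply: eq_bigr => t _; rewrite mulrCA.
  under [RHS]eq_bigr do rewrite mulr_sumr.
  rewrite [RHS]exchange_big /=; apply: eq_bigr => t _; rewrite mulr_sumr.
  by apply: eq_bigr => q _; rewrite mulrCA.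
Qed.

Lemma sum_ind (R : realFieldType) (I : finType) (P : pred I) (f : I -> R) :
  \sum_(t | P t) f t = \sum_t f t * (P t)%:R.
Proof.
rewrite big_mkcond; apply: eq_bigr => t _; by case: (P t); rewrite ?mulr1 ?mulr0.
Qed.

Lemma sum_delta (R : realFieldType) (n : nat) (j0 : 'I_n) (f : 'I_n -> R) :
  \sum_(j < n) (j == j0)%:R * f j = f j0.
Proof.
rewrite (bigD1 j0) //= eqxx mul1r big1 ?addr0 // => j /negbTE ->; by rewrite mul0r.
Qed.

Lemma Mexp (R : realFieldType) (n : nat) (lm : {set 'I_n} -> R) (b0 : R) (b : 'I_n -> R)
  (E : {set 'I_n}) :
  let Vs := fun E => \sum_T lm T * (E \subset T)%:R in
  \sum_T lm T * ((E \subset T)%:R * (b0 + \sum_(j < n) b j * (j \in T)%:R)) =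
  (b0 + \sum_(j in E) b j) * Vs E + \sum_(q in ~: E) b q * Vs (E :|: [set q]).
Proof.
move=> Vs; under eq_bigr do rewrite -bracket mulrDr.
rewrite big_split; congr (_ + _).
  by rewrite /Vs mulr_sumr; apply: eq_bigr => t _; rewrite mulrCA.
rewrite /Vs; under [RHS]eq_bigr do rewrite mulr_sumr.
rewrite [RHS]exchange_big /=; apply: eq_bigr => t _; rewrite mulr_sumr.
by apply: eq_bigr => q _; rewrite mulrCA.
Qed.

Definition inXb (R : realFieldType) (r n : nat) (C : 'I_r -> 'I_n -> R)
  (d : 'I_r -> R) (x : {set 'I_n}) : bool :=
  [forall l : 'I_r, d l <= \sum_(j < n) C l j * (j \in x)%:R].

Lemma inXP (R : realFieldType) (r n : nat) (C : 'I_r -> 'I_n -> R)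
  (d : 'I_r -> R) (x : {set 'I_n}) : reflect (inX C d x) (inXb C d x).
Proof. apply: (iffP forallP) => h l; exact: h. Qed.

Lemma set1_nz (T : finType) (x : T) : [set x] != set0.
Proof. by apply/set0Pn; exists x; rewrite set11. Qed.

Lemma key (R : realFieldType) (r n m : nat)
  (C : 'I_r -> 'I_n -> R) (d : 'I_r -> R)
  (a0 : 'I_m -> R) (a : 'I_m -> 'I_n -> R)
  (hn : (0 < n)%N)
  (hlow : forall j : 'I_n, exists l : 'I_r,
      (forall j' : 'I_n, C l j' = (j' == j)%:R) /\ d l = 0)
  (hupp : forall j : 'I_n, exists l : 'I_r,
      (forall j' : 'I_n, C l j' = - (j' == j)%:R) /\ d l = -1)
  (u : {set 'I_n} -> R) (i : 'I_m) (rhoi : R) (yi : 'I_n -> R) (w : {set 'I_n} -> R) :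
  0 <= rhoi -> inRLT C d n rhoi w -> (forall j, yi j = w [set j]) ->
  a0 i * rhoi + \sum_(j < n) a i j * yi j = 1 ->
  (forall S : {set 'I_n}, (1 <= #|S| <= n)%N ->
          u S = (a0 i + \sum_(j in S) a i j) * w S
                + \sum_(q in ~: S) a i q * w (S :|: [set q])) ->
  let V := Wv rhoi w in
  [/\ forall S, 0 <= lam V S,
      forall S, ~~ inXb C d S -> lam V S = 0,
      forall E : {set 'I_n}, \sum_(T : {set 'I_n} | E \subset T) lam V T * den a0 a i T
                = (if E == set0 then 1 else u E),
      rhoi = \sum_S lam V S
    & forall j, yi j = \sum_S lam V S * (j \in S)%:R].
Proof.
move=> h0 hr hy hnm hu V.
have hVs (E : {set 'I_n}) : V E = \sum_T lam V T * (E \subset T)%:R by rewrite -sum_ind -moeb1.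
have hfull (l : 'I_r) (S : {set 'I_n}) : 0 <= (\sum_(j < n) C l j * (j \in S)%:R - d l) * lam V S.
  rewrite -rltV_full -rlt_lhsE; apply: hr.
    by rewrite disjoints_subset setCK subxx.
  by rewrite setUCr cardsT card_ord.
have k1 (S : {set 'I_n}) : 0 <= lam V S.
  pose j0 := Ordinal hn; case jS: (j0 \in S).
    have [l [hC hd]] := hlow j0; have := hfull l S.
    rewrite hd subr0 (eq_bigr (fun j => (j == j0)%:R * (j \in S)%:R)); last first.
      by move=> j _; rewrite hC.
    by rewrite sum_delta jS mul1r.
  have [l [hC hd]] := hupp j0; have := hfull l S.
  rewrite hd (eq_bigr (fun j => - ((j == j0)%:R * (j \in S)%:R))); last first.
    by move=> j _; rewrite hC mulNr.
  by rewrite sumrN sum_delta jS oppr0 sub0r opprK mul1r.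
have k2 (S : {set 'I_n}) : ~~ inXb C d S -> lam V S = 0.
  rewrite /inXb negb_forall => /existsP [l]; rewrite -ltNge => hl.
  have := hfull l S; rewrite nmulr_rge0 ?subr_lt0 // => h; apply/le_anti; by rewrite h k1.
have k4 : rhoi = \sum_S lam V S.
  have e0 : V set0 = rhoi by rewrite /V /Wv eqxx.
  rewrite -{1}e0 (moeb1 V set0); apply: eq_bigl => S; by rewrite sub0set.
have Vne (E : {set 'I_n}) : E != set0 -> V E = w E by rewrite /V /Wv => /negbTE ->.
have k5 (j : 'I_n) : yi j = \sum_S lam V S * (j \in S)%:R.
  rewrite hy -Vne ?set1_nz // hVs; apply: eq_bigr => S _; by rewrite sub1set.
split => // E.
rewrite sum_ind (eq_bigr (fun T => lam V T * ((E \subset T)%:R * (a0 i + \sum_(j < n) a i j * (j \in T)%:R)))); last first.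
  by move=> T _; rewrite -mulrA (mulrC (den _ _ _ _)).
rewrite Mexp /=; case: eqP => [->|/eqP En].
  rewrite big_set0 addr0 -[RHS]hnm -(hVs set0) {1}/V /Wv eqxx; congr (_ + _).
  rewrite setC0; apply: eq_big => q; first by rewrite inE.
  move=> _; rewrite set0U -(hVs [set q]) Vne ?set1_nz //; by rewrite hy.
rewrite hu; last by rewrite card_gt0 En /=; apply: leq_trans (max_card _) _; rewrite card_ord.
rewrite -hVs Vne //; congr (_ + _); apply: eq_bigr => q _.
rewrite -hVs Vne //; apply/set0Pn; exists q; by rewrite !inE eqxx orbT.
Qed.

Lemma lam_ext (R : realFieldType) (n : nat) (V V' : {set 'I_n} -> R) S :
  (forall E, V E = V' E) -> lam V S = lam V' S.
Proof. by move=> h; rewrite /lam; apply: eq_bigr => U _; rewrite h. Qed.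

Lemma proj_to_conv (R : realFieldType) (r n m : nat)
  (C : 'I_r -> 'I_n -> R) (d : 'I_r -> R)
  (a0 : 'I_m -> R) (a : 'I_m -> 'I_n -> R)
  (hn : (0 < n)%N)
  (hlow : forall j : 'I_n, exists l : 'I_r,
      (forall j' : 'I_n, C l j' = (j' == j)%:R) /\ d l = 0)
  (hupp : forall j : 'I_n, exists l : 'I_r,
      (forall j' : 'I_n, C l j' = - (j' == j)%:R) /\ d l = -1)
  (hXne : exists x : {set 'I_n}, inX C d x)
  (hpos : forall (i : 'I_m) (x : {set 'I_n}), inX C d x -> 0 < den a0 a i x)
  (rho : 'I_m -> R) (y : 'I_m -> 'I_n -> R) :
  inProjR C d a0 a n rho y -> inConvG C d a0 a rho y.
Proof.
case=> u hu; have [x0 hx0] := hXne.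
case: (posnP m) => [m0 | mpos].
  exists 1%N, (fun _ => 1), (fun _ => x0); split => //.
  - by rewrite big_ord1.
  - by move=> i; have : (i < 0)%N by rewrite -m0 ltn_ord.
  - by move=> i; have : (i < 0)%N by rewrite -m0 ltn_ord.
pose i0 := Ordinal mpos.
pose Mu := fun E : {set 'I_n} => if E == set0 then 1 else u E.
pose mu := fun S => lam Mu S.
have hl : forall i, exists V : {set 'I_n} -> R,
   [/\ forall S, lam V S * den a0 a i S = mu S,
       forall S, 0 <= lam V S,
       forall S, ~~ inXb C d S -> lam V S = 0,
       rho i = \sum_S lam V S
     & forall j, y i j = \sum_S lam V S * (j \in S)%:R].
  move=> i; have [w [h0 hr hy hnm hu']] := hu i.
  have [k1 k2 k3 k4 k5] := key hn hlow hupp h0 hr hy hnm hu'.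
  exists (Wv (rho i) w); split => // S.
  by rewrite (moeb2 (fun S => lam (Wv (rho i) w) S * den a0 a i S)); apply: lam_ext => E; rewrite k3.
have mu1 : \sum_S mu S = 1.
  have [w [h0 hr hy hnm hu']] := hu i0.
  have [k1 k2 k3 k4 k5] := key hn hlow hupp h0 hr hy hnm hu'.
  have := k3 set0; rewrite eqxx => <-; apply: eq_big => S; first by rewrite sub0set.
  move=> _; rewrite (moeb2 (fun S => lam (Wv (rho i0) w) S * den a0 a i0 S)); apply: lam_ext => E; by rewrite k3.
have mu0 : forall S, 0 <= mu S.
  move=> S; have [V [e1 e2 e3 _ _]] := hl i0; rewrite -e1.
  case: (boolP (inXb C d S)) => hS; last by rewrite e3 // mul0r.
  by apply: mulr_ge0 => //; apply: ltW; apply: hpos; apply/inXP.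
pose xs' := fun S => if inXb C d S then S else x0.
have hlam : forall i, exists V : {set 'I_n} -> R,
   [/\ forall S, lam V S = mu S / den a0 a i (xs' S),
       rho i = \sum_S lam V S
     & forall j, y i j = \sum_S lam V S * (j \in S)%:R].
  move=> i; have [V [e1 e2 e3 e4 e5]] := hl i; exists V; split => // S.
  rewrite /xs'; case: (boolP (inXb C d S)) => hS; last by rewrite e3 // -e1 e3 // !mul0r.
  by rewrite -e1 mulfK //; apply: lt0r_neq0; apply: hpos; apply/inXP.
have xsX : forall S, inX C d (xs' S).
  by move=> S; rewrite /xs'; case: ifP => // /inXP.
have muX : forall S (f : {set 'I_n} -> R), mu S * f (xs' S) = mu S * f S.
  move=> S f; rewrite /xs'; case: (boolP (inXb C d S)) => // hS.
  have [V [e1 _ e3 _ _]] := hl i0; by rewrite -e1 e3 // !mul0r.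
exists #|[set: {set 'I_n}]|, (fun t => mu (enum_val t)), (fun t => xs' (enum_val t)); split.
- by move=> t.
- rewrite -(big_enum_val mu) /= -mu1; apply: eq_bigl => S; by rewrite in_setT.
- by move=> t.
- move=> i; have [V [e1 e2 e3]] := hlam i.
  rewrite -(big_enum_val (fun S => mu S / den a0 a i (xs' S))) /= e2.
  apply: eq_big => S; by rewrite ?in_setT ?e1.
- move=> i j; have [V [e1 e2 e3]] := hlam i.
  rewrite -(big_enum_val (fun S => mu S * ((j \in xs' S)%:R / den a0 a i (xs' S)))) /= e3.
  apply: eq_big => S; rewrite ?in_setT // => _.
  rewrite e1 (muX S (fun x => (j \in x)%:R / den a0 a i x)) /=.
  rewrite (muX S (fun x => (den a0 a i x)^-1)) /=.
  by rewrite mulrAC mulrA.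
Qed.

Unset Implicit Arguments.

Theorem theorem3 (R : realFieldType) (r n m : nat)
  (C : 'I_r -> 'I_n -> R) (d : 'I_r -> R)
  (a0 : 'I_m -> R) (a : 'I_m -> 'I_n -> R)
  (hn : (0 < n)%N)
  (hlow : forall j : 'I_n, exists l : 'I_r,
      (forall j' : 'I_n, C l j' = (j' == j)%:R) /\ d l = 0)
  (hupp : forall j : 'I_n, exists l : 'I_r,
      (forall j' : 'I_n, C l j' = - (j' == j)%:R) /\ d l = -1)
  (hXne : exists x : {set 'I_n}, inX C d x)
  (hpos : forall (i : 'I_m) (x : {set 'I_n}), inX C d x -> 0 < den a0 a i x) :
  (forall k : nat, (1 <= k)%N -> (k < n)%N ->
     forall (rho : 'I_m -> R) (y : 'I_m -> 'I_n -> R),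
       inProjR C d a0 a k.+1 rho y -> inProjR C d a0 a k rho y)
  /\
  (forall (rho : 'I_m -> R) (y : 'I_m -> 'I_n -> R),
       inProjR C d a0 a n rho y <-> inConvG C d a0 a rho y).
Proof.
split.
  move=> k _ hk; exact: part1.
move=> rho y; split.
  exact: proj_to_conv.
exact: conv_to_proj.
Qed.
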